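(* Let $X$ be a path connected, locally path connected topological space whose first singular homology group $H_1(X;\mathbb Z)$ is trivial. Let $K\subset X$ be a closed connected set. If $X\setminus K$ is connected, then the topological boundary $\partial K$ of $K$ in $X$ is connected. *)

(* Defs.v *)
From HB Require Import structures.
From mathcomp Require Import all_boot all_order all_algebra.
From mathcomp Require Import all_classical all_reals all_analysis.
From mathcomp Require Import Rstruct Rstruct_topology.
From Stdlib Require Import Rdefinitions.

Set Implicit Arguments.
Unset Strict Implicit.
Unset Printing Implicit Defensive.

Import Order.TTheory GRing.Theory Num.Theory.
Local Open Scope classical_set_scope.
Local Open Scope ring_scope.

Notation RR := Rdefinitions.R.

(** The unit interval = standard 1-simplex Δ^1 (vertices 0 and 1). *)
Definition I01 : set RR := `[0%R, 1%R].

(** Standard 2-simplex Δ^2 = {(s,t) | s,t >= 0, s+t <= 1},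
    vertices e0 = (0,0), e1 = (1,0), e2 = (0,1). *)
Definition Delta2 : set (RR * RR) :=
  [set p | (0 <= p.1)%R /\ (0 <= p.2)%R /\ (p.1 + p.2 <= 1)%R].

Section Topo.
Variable X : topologicalType.

Definition is_path_in (A : set X) (f : RR -> X) (x y : X) :=
  {within I01, continuous f} /\ f 0%R = x /\ f 1%R = y /\ f @` I01 `<=` A.

Definition path_connected_set (A : set X) :=
  forall x y, A x -> A y -> exists f, is_path_in A f x y.

Definition path_connected_space := path_connected_set setT.

Definition locally_path_connected :=
  forall (x : X) (U : set X), open U -> U x ->
    exists V : set X, [/\ open V, V x, V `<=` U & path_connected_set V].

(** Singular chains with integer coefficients, as finite formal sums
    (lists of (coefficient, simplex)).  A singular 1-simplex is a map
    RR -> X continuous on Δ^1 = [0,1]; a singular 2-simplex is a map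
    RR*RR -> X continuous on Δ^2.  Two maps represent the same simplex
    iff they agree on the standard simplex. *)
Definition sing1 (s : RR -> X) := {within I01, continuous s}.
Definition sing2 (t : RR * RR -> X) := {within Delta2, continuous t}.

Definition same1 (s s' : RR -> X) := forall u, I01 u -> s u = s' u.

Definition chain1 := seq (int * (RR -> X)).
Definition chain2 := seq (int * (RR * RR -> X)).

Definition ind (P : Prop) : int := if `[< P >] then 1 else 0.

Definition coef1 (c : chain1) (s : RR -> X) : int :=
  \sum_(e <- c) e.1 * ind (same1 e.2 s).

(** Coefficient of the point x in the 0-chain ∂c, where ∂s = s(1) - s(0). *)
Definition bd1_coef (c : chain1) (x : X) : int :=
  \sum_(e <- c) e.1 * (ind (e.2 1%R = x) - ind (e.2 0%R = x)).

(** Faces of a 2-simplex: d_i t is the restriction to the face opposite e_i,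
    via the order preserving affine identification with Δ^1. *)
Definition face0 (t : RR * RR -> X) : RR -> X := fun u => t (1 - u, u)%R.
Definition face1 (t : RR * RR -> X) : RR -> X := fun u => t (0, u)%R.
Definition face2 (t : RR * RR -> X) : RR -> X := fun u => t (u, 0)%R.

(** Coefficient of s in ∂d, where ∂t = d0 t - d1 t + d2 t. *)
Definition bd2_coef (d : chain2) (s : RR -> X) : int :=
  \sum_(e <- d) e.1 * (ind (same1 (face0 e.2) s) - ind (same1 (face1 e.2) s)
                       + ind (same1 (face2 e.2) s)).

Definition is_cycle1 (c : chain1) := forall x, bd1_coef c x = 0.

Definition H1_trivial :=
  forall c : chain1, (forall e, e \in c -> sing1 e.2) -> is_cycle1 c ->
    exists d : chain2, (forall e, e \in d -> sing2 e.2) /\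
      forall s, sing1 s -> coef1 c s = bd2_coef d s.

Definition boundary (K : set X) : set X := closure K `\` interior K.

End Topo.

(* Main.v *)
Require Import Defs.
From mathcomp Require Import all_boot all_order all_algebra.
From mathcomp Require Import all_classical all_reals all_analysis.
From mathcomp Require Import Rstruct Rstruct_topology.
From mathcomp Require Import ring lra.
Import Order.TTheory GRing.Theory Num.Theory.
Import numFieldNormedType.Exports.
Local Open Scope classical_set_scope.
Local Open Scope ring_scope.


Lemma wcont_nbhs {T Y : topologicalType} {D : set T} {f : T -> Y} {x U} :
  {within D, continuous f} -> D x -> open U -> U (f x) ->
  nbhs x [set y | D y -> U (f y)].
Proof.
move=> /subspace_continuousP cf Dx oU Ufx.
have := cf x Dx U; rewrite /=. move=> /(_ (open_nbhs_nbhs (conj oU Ufx))).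
by [].
Qed.

Lemma wcont_ball {T : pseudoMetricType RR} {Y : topologicalType} {D : set T}
  {f : T -> Y} {x U} :
  {within D, continuous f} -> D x -> open U -> U (f x) ->
  exists2 e : RR, 0 < e & forall y, D y -> ball x e y -> U (f y).
Proof.
move=> cf Dx oU Ufx; have /nbhs_ballP [e e0 He] := wcont_nbhs cf Dx oU Ufx.
by exists e => // y Dy /He; apply.
Qed.

Lemma wcont_comp {S T Y : topologicalType} (A : set T) (B : set S)
  (f : T -> Y) (g : S -> T) :
  {within A, continuous f} -> {within B, continuous g} -> g @` B `<=` A ->
  {within B, continuous (f \o g)}.
Proof.
move=> /subspace_continuousP cf /subspace_continuousP cg gBA.
apply/(@subspace_continuousP _ B _ (f \o g)) => x Bx U /= nU.
have Agx : A (g x) by apply: gBA; exists x.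
have := cf _ Agx U nU => /= nV.
have := cg _ Bx _ nV => /=.
move=> H; move: H; rewrite !nbhs_simpl /= /within /=.
apply: filterS => y /= H By.
by apply: H => //; apply: gBA; exists y.
Qed.

Lemma connected_split {T : topologicalType} {S U V : set T} :
  connected S -> open U -> open V -> U `&` V = set0 -> S `<=` U `|` V ->
  S `<=` U \/ S `<=` V.
Proof.
move=> cS oU oV UV SUV.
have [[z [Sz Uz]]|nz] := pselect (exists z, S z /\ U z).
  left.
  have E : S `&` U = S.
    apply: cS.
    - by exists z.
    - by exists U.
    - exists (~` V); first by apply: open_closedC.
      apply/seteqP; split => y [Sy H]; split => //.
        by move=> Vy; have : (U `&` V) y by []; rewrite UV.
      by case: (SUV y Sy) => // Vy; exfalso; apply: H.
  by move=> y Sy; rewrite -E in Sy; case: Sy.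
right => y Sy; case: (SUV y Sy) => // Uy; exfalso; apply: nz; by exists y.
Qed.

Lemma locconst_connected {T : topologicalType} {Z : Type} (S : set T) (h : T -> Z) :
  connected S ->
  (forall x, S x -> exists2 W, open W /\ W x & forall y, S y -> W y -> h y = h x) ->
  forall x y, S x -> S y -> h x = h y.
Proof.
move=> cS lc x y Sx Sy.
pose E := [set z | S z /\ h z = h x].
pose Ws := [set W : set T | open W /\ exists z, E z /\ W z /\
   (forall y, S y -> W y -> h y = h z)].
pose Ws' := [set W : set T | open W /\ exists z, S z /\ h z <> h x /\ W z /\
   (forall y, S y -> W y -> h y = h z)].
have E1 : E = S.
  apply: cS.
  - by exists x.
  - exists (\bigcup_(W in Ws) W).
      by apply: bigcup_open => W [].
    apply/seteqP; split.
      move=> z [Sz hz]; split => //.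
      have [W [oW Wz] HW] := lc z Sz.
      by exists W => //; split => //; exists z.
    move=> w [Sw [W [oW [z [[Sz hz] [Wz HW]]]] Ww]]; split => //.
    by rewrite (HW w Sw Ww).
  - exists (~` \bigcup_(W in Ws') W).
      by apply: open_closedC; apply: bigcup_open => W [].
    apply/seteqP; split.
      move=> z [Sz hz]; split => //.
      move=> [W [oW [z' [Sz' [hz' [Wz' HW]]]]] Wz].
      by apply: hz'; rewrite -(HW z Sz Wz).
    move=> w [Sw nD]; split => //; apply: contrapT => hw.
    apply: nD; have [W [oW Ww] HW] := lc w Sw.
    by exists W => //; split => //; exists w.
have : E y by rewrite E1.
by case=> _ ->.
Qed.


Definition seg (u v : RR) : set RR := [set` `[u, v]].

Lemma segP u v x : seg u v x <-> u <= x <= v.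
Proof. by rewrite /seg /= in_itv. Qed.

Lemma seg_conn u v : connected (seg u v).
Proof. exact/connected_intervalP/interval_is_interval. Qed.

Lemma I01P x : I01 x <-> 0 <= x <= 1.
Proof. by rewrite /I01 /= in_itv. Qed.

Lemma seg_sub {u v} : 0 <= u -> v <= 1 -> seg u v `<=` I01.
Proof. move=> u0 v1 x /segP /andP [ux xv]; apply/I01P; apply/andP; split; lra. Qed.

Lemma big_mulsplit (V : zmodType) (F : nat -> V) N M :
  \sum_(0 <= j < N * M) F j = \sum_(0 <= k < N) \sum_(0 <= m < M) F (k * M + m)%N.
Proof.
elim: N => [|N IH]; first by rewrite mul0n !big_geq.
rewrite big_nat_recr //= -IH mulSn addnC (big_cat_nat _ (leq_addr M (N * M))) //=.
congr (_ + _).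
rewrite -{1}(add0n (N * M)%N) big_addn addKn.
by apply: eq_bigr => i _; rewrite addnC.
Qed.

Definition pt (N k : nat) : RR := k%:R / N%:R.

Lemma pt_ge0 N k : 0 <= pt N k.
Proof. by rewrite /pt divr_ge0 // ler0n. Qed.

Lemma pt_le N a b : (a <= b)%N -> pt N a <= pt N b.
Proof. by move=> ab; rewrite /pt ler_wpM2r // ?invr_ge0 ?ler0n // ler_nat. Qed.

Lemma pt_NN {N} : (0 < N)%N -> pt N N = 1.
Proof. by move=> N0; rewrite /pt divff // pnatr_eq0 -lt0n. Qed.

Lemma pt_0 N : pt N 0 = 0.
Proof. by rewrite /pt mul0r. Qed.

Lemma pt_le1 {N k} : (0 < N)%N -> (k <= N)%N -> pt N k <= 1.
Proof. by move=> N0 kN; rewrite -(pt_NN N0) pt_le. Qed.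

Lemma pt_mul {N M} k : (0 < N)%N -> (0 < M)%N -> pt (N * M) (k * M) = pt N k.
Proof.
move=> N0 M0; rewrite /pt !natrM; field.
by apply/andP; split; rewrite pnatr_eq0 -lt0n.
Qed.

Lemma fstc : continuous (fun z : RR * RR => z.1).
Proof. move=> z; exact: cvg_fst. Qed.
Lemma sndc : continuous (fun z : RR * RR => z.2).
Proof. move=> z; exact: cvg_snd. Qed.
Lemma gcont : continuous (fun z : RR * RR => (z.1 * (1 - z.2), z.1 * z.2)).
Proof.
move=> z.
have h1 : {for z, continuous (fun z : RR * RR => z.1 * (1 - z.2))}.
  apply: (@continuousM _ _ (fun z : RR * RR => z.1) (fun z : RR * RR => 1 - z.2)); first exact: fstc.
  apply: cvgB; [exact: cvg_cst|exact: sndc].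
have h2 : {for z, continuous (fun z : RR * RR => z.1 * z.2)}.
  apply: (@continuousM _ _ (fun z : RR * RR => z.1) (fun z : RR * RR => z.2)); [exact: fstc|exact: sndc].
exact: (cvg_pair h1 h2).
Qed.
Lemma pairlc (c : RR) : continuous (fun s : RR => (s, c)).
Proof. move=> s; exact: (cvg_pair cvg_id (cvg_cst c)). Qed.
Lemma pairrc (c : RR) : continuous (fun s : RR => (c, s)).
Proof. move=> s; exact: (cvg_pair (cvg_cst c) cvg_id). Qed.

Section Wind.
Variables (X : topologicalType) (K A B : set X).
Hypothesis cK : closed K.
Hypothesis hbd : forall x, K x -> ~ K° x -> A x \/ B x.

Definition La (x : X) : int :=
  if `[< K x >] then (if `[< A x >] then 1 else 0) else 2.
Definition Lb (x : X) : int :=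
  if `[< K x >] then (if `[< B x >] then 3 else 4) else 2.

Definition img (s : RR -> X) u v := s @` seg u v.

Definition sv (s : RR -> X) u v : int :=
  if `[< img s u v `<=` ~` B >] then La (s v) - La (s u)
  else Lb (s v) - Lb (s u).

Definition cont (s : RR -> X) := {within I01, continuous s}.

Lemma img_conn {s u v} : cont s -> 0 <= u -> v <= 1 -> connected (img s u v).
Proof.
move=> cs u0 v1; apply: connected_continuous_connected; first exact: seg_conn.
apply: (continuous_subspaceW _ cs); exact: seg_sub.
Qed.

Lemma img_l {s u v} : u <= v -> img s u v (s u).
Proof. by move=> uv; exists u => //; apply/segP; rewrite lexx uv. Qed.
Lemma img_r {s u v} : u <= v -> img s u v (s v).
Proof. by move=> uv; exists v => //; apply/segP; rewrite lexx uv. Qed.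

Lemma svB s u v : img s u v `<=` ~` B -> sv s u v = La (s v) - La (s u).
Proof. by move=> H; rewrite /sv asboolT. Qed.

Lemma svA s u v : cont s -> 0 <= u -> u <= v -> v <= 1 ->
  img s u v `<=` ~` A -> sv s u v = Lb (s v) - Lb (s u).
Proof.
move=> cs u0 uv v1 HA; rewrite /sv.
have [HB|HB] := pselect (img s u v `<=` ~` B); last by rewrite asboolF.
rewrite asboolT //.
have [H|H] : img s u v `<=` K° \/ img s u v `<=` ~` K.
  apply: (connected_split (img_conn (s:=s) cs u0 v1) (@open_interior _ K) (closed_openC cK)).
  - apply/seteqP; split => // x [/interior_subset Kx nKx]; exact: nKx.
  - move=> x Ix; have [Kx|nKx] := pselect (K x); last by right.
    left; apply: contrapT => nI.
    by case: (hbd x Kx nI) => [/(HA _ Ix)|/(HB _ Ix)].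
- have key : forall x, img s u v x -> La x = 0 /\ Lb x = 4.
    move=> x Ix; have /interior_subset Kx := H _ Ix.
    by rewrite /La /Lb asboolT // (asboolF (HA _ Ix)) (asboolF (HB _ Ix)).
  have [-> ->] := key _ (img_r uv); have [-> ->] := key _ (img_l uv).
  by [].
- have key : forall x, img s u v x -> La x = 2 /\ Lb x = 2.
    by move=> x Ix; rewrite /La /Lb !asboolF //; apply: H.
  have [-> ->] := key _ (img_r uv); have [-> ->] := key _ (img_l uv).
  by [].
Qed.

Lemma img_sub {s u v u' v'} : u <= u' -> v' <= v -> img s u' v' `<=` img s u v.
Proof.
move=> uu vv y [x /segP /andP [h1 h2] <-]; exists x => //.
apply/segP/andP; split; [exact: le_trans h1|exact: le_trans vv].
Qed.

Definition chartok s a b (L : X -> int) := forall u v, a <= u -> u <= v -> v <= b ->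
  sv s u v = L (s v) - L (s u).

Lemma chart_of {s a b} : cont s -> 0 <= a -> b <= 1 ->
  img s a b `<=` ~` B \/ img s a b `<=` ~` A -> exists L, chartok s a b L.
Proof.
move=> cs a0 b1 [H|H].
  exists La => u v au uv vb; apply: svB.
  by move=> x /(img_sub au vb); apply: H.
exists Lb => u v au uv vb; apply: svA => //.
- exact: le_trans au.
- exact: le_trans vb b1.
- by move=> x /(img_sub au vb); apply: H.
Qed.

Lemma tele s (q : nat -> RR) n (L : X -> int) :
  (forall k, (k < n)%N -> sv s (q k) (q k.+1) = L (s (q k.+1)) - L (s (q k))) ->
  \sum_(0 <= k < n) sv s (q k) (q k.+1) = L (s (q n)) - L (s (q 0%N)).
Proof.
move=> H; rewrite (eq_big_nat _ _ (F2 := fun k => L (s (q k.+1)) - L (s (q k)))).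
  by rewrite telescope_sumr.
by move=> k /andP [_ kn]; apply: H.
Qed.

Definition fine s N := forall k, (k < N)%N ->
  img s (pt N k) (pt N k.+1) `<=` ~` B \/ img s (pt N k) (pt N k.+1) `<=` ~` A.

Definition val s N : int := \sum_(0 <= k < N) sv s (pt N k) (pt N k.+1).

Lemma refine {s N M} : cont s -> (0 < N)%N -> (0 < M)%N -> fine s N ->
  val s (N * M) = val s N.
Proof.
move=> cs N0 M0 fN; rewrite /val big_mulsplit; apply: eq_big_nat => k /andP [_ kN].
have kN' : (k.+1 <= N)%N by [].
have [L HL] := chart_of cs (pt_ge0 N k) (pt_le1 N0 kN') (fN k kN).
rewrite HL ?lexx ?pt_le //.
have -> : \sum_(0 <= m < M) sv s (pt (N * M) (k * M + m)) (pt (N * M) (k * M + m).+1)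
  = \sum_(0 <= m < M) sv s ((fun m => pt (N * M) (k * M + m)) m)
        ((fun m => pt (N * M) (k * M + m)) m.+1).
  by apply: eq_bigr => m _; rewrite addnS.
rewrite (tele _ _ _ L).
  by rewrite /= addn0 pt_mul // -mulSnr pt_mul.
move=> m mM /=; apply: HL.
- by rewrite -(pt_mul k N0 M0) pt_le // leq_addr.
- by rewrite pt_le // leq_add2l.
- by rewrite -(pt_mul k.+1 N0 M0) pt_le // mulSnr leq_add2l.
Qed.

Definition phi s := xget (0 : int) [set v | exists N, (0 < N)%N /\ fine s N /\ v = val s N].

Lemma phiE s N : cont s -> (0 < N)%N -> fine s N -> phi s = val s N.
Proof.
move=> cs N0 fN.
have [N' [N'0 [fN' ->]]] : [set v | exists N, (0 < N)%N /\ fine s N /\ v = val s N] (phi s).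
  by apply: xgetPex; exists (val s N); exists N.
by rewrite -(refine cs N'0 N0 fN') mulnC (refine cs N0 N'0 fN).
Qed.

Lemma img01 s : img s 0 1 = s @` I01.
Proof. by []. Qed.

Lemma phi_La s : cont s -> s @` I01 `<=` ~` B -> phi s = La (s 1) - La (s 0).
Proof.
move=> cs H; rewrite (@phiE s 1) //.
  by rewrite /val big_nat1 pt_0 pt_NN // svB // img01.
by move=> k; rewrite ltnS leqn0 => /eqP ->; left; rewrite pt_0 pt_NN // img01.
Qed.

Lemma phi_Lb s : cont s -> s @` I01 `<=` ~` A -> phi s = Lb (s 1) - Lb (s 0).
Proof.
move=> cs H; rewrite (@phiE s 1) //.
  by rewrite /val big_nat1 pt_0 pt_NN // svA //; rewrite ?lexx ?ler01.
by move=> k; rewrite ltnS leqn0 => /eqP ->; right; rewrite pt_0 pt_NN // img01.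
Qed.

Lemma img_ext s s' u v : same1 s s' -> 0 <= u -> v <= 1 -> img s u v = img s' u v.
Proof.
move=> E u0 v1; apply/seteqP; split => y [x Hx <-]; exists x => //.
  by rewrite (E x (seg_sub u0 v1 x Hx)).
by rewrite (E x (seg_sub u0 v1 x Hx)).
Qed.

Lemma phi_ext s s' : same1 s s' -> phi s = phi s'.
Proof.
move=> E; rewrite /phi; congr xget; apply/funext => v; apply/propext.
have key : forall N k, (k < N)%N -> img s (pt N k) (pt N k.+1) = img s' (pt N k) (pt N k.+1)
   /\ sv s (pt N k) (pt N k.+1) = sv s' (pt N k) (pt N k.+1).
  move=> N k kN; have N0 : (0 < N)%N by apply: leq_ltn_trans kN.
  have e1 := img_ext s s' (pt N k) (pt N k.+1) E (pt_ge0 N k) (pt_le1 N0 kN).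
  split => //.
  rewrite /sv e1 !E //; apply/I01P; rewrite ?pt_ge0 ?pt_le1 //= ltnW //.
split => -[N [N0 [fN ->]]]; exists N; split => //; split.
- by move=> k kN; rewrite -(proj1 (key N k kN)); apply: fN.
- by apply: eq_big_nat => k /andP [_ kN]; rewrite (proj2 (key N k kN)).
- by move=> k kN; rewrite (proj1 (key N k kN)); apply: fN.
- by apply: eq_big_nat => k /andP [_ kN]; rewrite (proj2 (key N k kN)).
Qed.

Lemma val_const s N c : (forall u, I01 u -> s u = c) -> val s N = 0.
Proof.
move=> E; rewrite /val big1_seq // => k /andP [_]; rewrite mem_index_iota => /andP [_ kN].
have N0 : (0 < N)%N by apply: leq_ltn_trans kN.
rewrite /sv !E; first by case: ifP => _; rewrite subrr.
- by apply/I01P; rewrite pt_ge0 pt_le1 // ltnW.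
- by apply/I01P; rewrite pt_ge0 pt_le1.
Qed.

Hypothesis cA : closed A.
Hypothesis cB : closed B.
Hypothesis hAB : forall x, A x -> B x -> False.

Definition Sq : set (RR * RR) := [set z | I01 z.1 /\ I01 z.2].
Definition cell N k i : set (RR * RR) :=
  [set z | seg (pt N k) (pt N k.+1) z.1 /\ seg (pt N i) (pt N i.+1) z.2].
Definition boxS N (z : RR * RR) : set (RR * RR) :=
  [set w | Sq w /\ (z.1 <= w.1 <= z.1 + N%:R^-1) /\ (z.2 <= w.2 <= z.2 + N%:R^-1)].

Lemma Sq_compact : compact Sq.
Proof. exact: (compact_setX (@segment_compact _ 0 1) (@segment_compact _ 0 1)). Qed.

Lemma ptS N k : pt N k.+1 = pt N k + N%:R^-1.
Proof. by rewrite /pt -natr1 mulrDl mul1r. Qed.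

Lemma lebesgue2 (H : RR * RR -> X) : {within Sq, continuous H} ->
  exists N, (0 < N)%N /\ forall k i, (k < N)%N -> (i < N)%N ->
    H @` cell N k i `<=` ~` B \/ H @` cell N k i `<=` ~` A.
Proof.
move=> cH.
pose P N z := H @` boxS N z `<=` ~` B \/ H @` boxS N z `<=` ~` A.
have cov : \forall N \near \oo, Sq `<=` P N.
  apply: (proj1 (compact_near_coveringP Sq) Sq_compact nat (nbhs \oo) P).
  move=> z Sqz.
  have [U [oU UHz UBA]] : exists U, [/\ open U, U (H z) & U `<=` ~` B \/ U `<=` ~` A].
    have [Bz|nBz] := pselect (B (H z)).
      exists (~` A); split => //; first exact: closed_openC.
        by move=> Az; apply: (hAB _ Az Bz).
      by right.
    exists (~` B); split => //; first exact: closed_openC.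
    by left.
  have [e e0 He] := wcont_ball cH Sqz oU UHz.
  exists (ball z (e / 2), [set N | 2 / e < N%:R]); first split.
  - by apply: nbhsx_ballx; rewrite divr_gt0.
  - exact: nbhs_infty_gtr.
  case=> z' N /= [bz NM].
  have N0 : 0 < N%:R :> RR.
    by apply: lt_trans NM; rewrite divr_gt0.
  have Ne : N%:R^-1 < e / 2.
    have H2 : 2 < N%:R * e by rewrite -ltr_pdivrMr.
    have ny : N%:R * N%:R^-1 = 1 :> RR by rewrite mulfV // gt_eqF.
    nra.
  have sub : H @` boxS N z' `<=` U.
    move=> y [w [Sqw [/andP [w1 w1'] /andP [w2 w2']]] <-].
    apply: He => //.
    move: bz; case: z z' w {Sqz UHz} Sqw w1 w1' w2 w2' => a b [a' b'] [c d] /=.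
    move=> _ w1 w1' w2 w2'.
    rewrite /ball /= /prod_ball /= /ball /=.
    move=> [h1 h2]; rewrite !ltr_norml in h1 h2 *.
    move: h1 h2 => /andP [h1 h1'] /andP [h2 h2'].
    by split; apply/andP; split; lra.
  by case: UBA => UBA; [left|right]; move=> y /sub /UBA.
have [N [N0 HN]] : exists N, (0 < N)%N /\ Sq `<=` P N.
  have H3 : \forall N \near \oo, ((0 < N)%N /\ Sq `<=` P N).
    by apply: filterI; [exact: nbhs_infty_gt| exact: cov].
  by case: (filter_ex H3) => N [N0 HN]; exists N.
exists N; split => // k i kN iN.
have Sqz : Sq (pt N k, pt N i).
  by split; apply/I01P; rewrite pt_ge0 pt_le1 // ltnW.
have sub : cell N k i `<=` boxS N (pt N k, pt N i).
  move=> [c d] [/segP /andP [c1 c2] /segP /andP [d1 d2]] /=.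
  split; last by rewrite -!ptS c1 c2 d1 d2.
  split; apply/I01P; apply/andP; split.
  - exact: le_trans (pt_ge0 N k) c1.
  - exact: le_trans c2 (pt_le1 N0 kN).
  - exact: le_trans (pt_ge0 N i) d1.
  - exact: le_trans d2 (pt_le1 N0 iN).
case: (HN _ Sqz) => HB; [left|right]; move=> y [w cw <-]; apply: HB.
  by exists w => //; apply: sub.
by exists w => //; apply: sub.
Qed.

Definition Hm (t : RR * RR -> X) (z : RR * RR) := t (z.1 * (1 - z.2), z.1 * z.2).
Definition rowc t c := fun s => Hm t (s, c).
Definition colc t c := fun r => Hm t (c, r).

Lemma Hm_cont t : {within Delta2, continuous t} -> {within Sq, continuous (Hm t)}.
Proof.
move=> ct; apply: (@wcont_comp _ _ _ Delta2 Sq t (fun z : RR * RR => (z.1 * (1 - z.2), z.1 * z.2)) ct (continuous_subspaceT gcont)).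
move=> _ [[a b] [/I01P /andP [a1 a2] /I01P /andP [b1 b2]] <-] /=.
split; [apply/RleP|split; apply/RleP].
- by apply: mulr_ge0 => //; rewrite subr_ge0.
- exact: mulr_ge0.
- change (a * (1 - b) + a * b <= 1); by rewrite -mulrDr subrK mulr1.
Qed.

Lemma rowc_cont t c : {within Delta2, continuous t} -> I01 c -> cont (rowc t c).
Proof.
move=> ct Ic; rewrite /cont /rowc; apply: (@wcont_comp _ _ _ Sq I01 (Hm t) (fun s : RR => (s, c)) (Hm_cont t ct) (continuous_subspaceT (pairlc c))).
by move=> _ [s Is <-].
Qed.

Lemma colc_cont t c : {within Delta2, continuous t} -> I01 c -> cont (colc t c).
Proof.
move=> ct Ic; rewrite /cont /rowc /colc; apply: (@wcont_comp _ _ _ Sq I01 (Hm t) (fun s : RR => (c, s)) (Hm_cont t ct) (continuous_subspaceT (pairrc c))).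
by move=> _ [s Is <-].
Qed.

Lemma ptI {N k} : (0 < N)%N -> (k <= N)%N -> I01 (pt N k).
Proof. by move=> N0 kN; apply/I01P; rewrite pt_ge0 pt_le1. Qed.

Lemma segl u v : u <= v -> seg u v u.
Proof. by move=> uv; apply/segP; rewrite lexx uv. Qed.
Lemma segr u v : u <= v -> seg u v v.
Proof. by move=> uv; apply/segP; rewrite lexx uv. Qed.

Lemma near_cell N i : (0 < N)%N -> (i <= N)%N ->
  exists2 i', (i' < N)%N & seg (pt N i') (pt N i'.+1) (pt N i).
Proof.
move=> N0 iN; have [ilt|ige] := ltnP i N.
  by exists i => //; apply: segl; rewrite pt_le.
exists N.-1; first by rewrite prednK ?leqnn // ltnW.
have -> : i = N by apply/eqP; rewrite eqn_leq iN ige.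
by rewrite prednK //; apply: segr; rewrite pt_le // leq_pred.
Qed.

Section Simplex.
Variable t : RR * RR -> X.
Hypothesis ct : {within Delta2, continuous t}.
Variable N : nat.
Hypothesis N0 : (0 < N)%N.
Hypothesis HN : forall k i, (k < N)%N -> (i < N)%N ->
    Hm t @` cell N k i `<=` ~` B \/ Hm t @` cell N k i `<=` ~` A.

Lemma cell_chart k i : (k < N)%N -> (i < N)%N -> exists L, forall s u v, cont s ->
  0 <= u -> u <= v -> v <= 1 -> img s u v `<=` Hm t @` cell N k i ->
  sv s u v = L (s v) - L (s u).
Proof.
move=> kN iN; case: (HN k i kN iN) => HC.
  exists La => s u v cs u0 uv v1 sub; apply: svB.
  by move=> y /sub; apply: HC.
exists Lb => s u v cs u0 uv v1 sub; apply: svA => //.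
by move=> y /sub; apply: HC.
Qed.

Let h i k := sv (rowc t (pt N i)) (pt N k) (pt N k.+1).
Let v k i := sv (colc t (pt N k)) (pt N i) (pt N i.+1).

Lemma cellsum k i : (k < N)%N -> (i < N)%N ->
  h i k + v k.+1 i - h i.+1 k - v k i = 0.
Proof.
move=> kN iN; have [L HL] := cell_chart k i kN iN.
have Ik := ptI N0 (ltnW kN); have Ik1 := ptI N0 kN.
have Ii := ptI N0 (ltnW iN); have Ii1 := ptI N0 iN.
have lek : pt N k <= pt N k.+1 by rewrite pt_le.
have lei : pt N i <= pt N i.+1 by rewrite pt_le.
have ge0 := pt_ge0; have le1 : forall j, (j <= N)%N -> pt N j <= 1 by move=> j; apply: pt_le1.
rewrite /h /v.
rewrite (HL (rowc t (pt N i))) ?pt_ge0 ?pt_le1 //; first last.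
  - by move=> _ [s ss <-]; exists (s, pt N i) => //; split => //=; apply: segl.
  - exact: rowc_cont.
rewrite (HL (rowc t (pt N i.+1))) ?pt_ge0 ?pt_le1 //; first last.
  - by move=> _ [s ss <-]; exists (s, pt N i.+1) => //; split => //=; apply: segr.
  - exact: rowc_cont.
rewrite (HL (colc t (pt N k))) ?pt_ge0 ?pt_le1 //; first last.
  - by move=> _ [s ss <-]; exists (pt N k, s) => //; split => //=; apply: segl.
  - exact: colc_cont.
rewrite (HL (colc t (pt N k.+1))) ?pt_ge0 ?pt_le1 //; first last.
  - by move=> _ [s ss <-]; exists (pt N k.+1, s) => //; split => //=; apply: segr.
  - exact: colc_cont.
rewrite /rowc /colc; ring.
Qed.

Lemma tele2 (V : zmodType) (f : nat -> V) n :
  \sum_(0 <= i < n) (f i - f i.+1) = f 0%N - f n.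
Proof.
rewrite -[RHS]opprB -telescope_sumr // -sumrN; apply: eq_bigr => i _; by rewrite opprB.
Qed.

Lemma grid : val (rowc t (pt N 0)) N - val (rowc t (pt N N)) N +
  (val (colc t (pt N N)) N - val (colc t (pt N 0)) N) = 0.
Proof.
have E : \sum_(0 <= i < N) \sum_(0 <= k < N) ((h i k - h i.+1 k) + (v k.+1 i - v k i)) = 0.
  apply: big1_seq => i /andP [_]; rewrite mem_index_iota => /andP [_ iN].
  apply: big1_seq => k /andP [_]; rewrite mem_index_iota => /andP [_ kN].
  rewrite -[RHS](cellsum k i kN iN); ring.
move: E; under eq_bigr => i _ do rewrite big_split /=.
rewrite big_split /=.
under [X in X + _ = 0 -> _]eq_bigr => i _ do idtac.
rewrite exchange_big_nat /=.
under eq_bigr => k _ do rewrite tele2.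
under [X in _ + X = 0 -> _]eq_bigr => i _ do rewrite telescope_sumr //.
by rewrite !sumrB.
Qed.

Lemma fine_row i : (i <= N)%N -> fine (rowc t (pt N i)) N.
Proof.
move=> iN k kN; have [i' i'N si] := near_cell N i N0 iN.
case: (HN k i' kN i'N) => HC; [left|right]; move=> y [s ss <-]; apply: HC;
  by exists (s, pt N i).
Qed.

Lemma fine_col k : (k <= N)%N -> fine (colc t (pt N k)) N.
Proof.
move=> kN i iN; have [k' k'N sk] := near_cell N k N0 kN.
case: (HN k' i k'N iN) => HC; [left|right]; move=> y [s ss <-]; apply: HC;
  by exists (pt N k, s).
Qed.

End Simplex.

Lemma phi_simplex t : sing2 t -> phi (face0 t) - phi (face1 t) + phi (face2 t) = 0.
Proof.
move=> ct; have [N [N0 HN]] := lebesgue2 (Hm t) (Hm_cont t ct).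
have G := grid t ct N N0 HN.
have e0 : phi (face2 t) = val (rowc t (pt N 0)) N.
  rewrite -(phiE _ _ (rowc_cont t _ ct (ptI N0 (leq0n N))) N0 (fine_row t N N0 HN _ (leq0n N))).
  apply: phi_ext => u Iu.
  by rewrite /face2 /rowc /Hm /= pt_0 subr0 mulr1 mulr0.
have e1 : phi (face1 t) = val (rowc t (pt N N)) N.
  rewrite -(phiE _ _ (rowc_cont t _ ct (ptI N0 (leqnn N))) N0 (fine_row t N N0 HN _ (leqnn N))).
  apply: phi_ext => u Iu.
  by rewrite /face1 /rowc /Hm /= pt_NN // subrr mulr1 mulr0.
have e2 : phi (face0 t) = val (colc t (pt N N)) N.
  rewrite -(phiE _ _ (colc_cont t _ ct (ptI N0 (leqnn N))) N0 (fine_col t N N0 HN _ (leqnn N))).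
  apply: phi_ext => u Iu.
  by rewrite /face0 /colc /Hm /= pt_NN // !mul1r.
have e3 : val (colc t (pt N 0)) N = 0.
  apply: (val_const _ _ (t (0, 0))) => u Iu.
  by rewrite /colc /Hm /= pt_0 !mul0r.
move: G; rewrite e0 e1 e2 e3 => G.
rewrite -[RHS]G; ring.
Qed.

End Wind.


Section Dedup.
Variable X : topologicalType.
Variable ph : (RR -> X) -> int.
Hypothesis phx : forall s s', same1 s s' -> ph s = ph s'.

Lemma same1_refl (s : RR -> X) : same1 s s.
Proof. by []. Qed.
Lemma same1_sym {s s' : RR -> X} : same1 s s' -> same1 s' s.
Proof. by move=> E u Iu; rewrite E. Qed.
Lemma same1_trans {s1 s2 s3 : RR -> X} : same1 s1 s2 -> same1 s2 s3 -> same1 s1 s3.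
Proof. by move=> E1 E2 u Iu; rewrite E1 // E2. Qed.

Lemma indT (P : Prop) : P -> ind P = 1.
Proof. by move=> p; rewrite /ind asboolT. Qed.
Lemma indF (P : Prop) : ~ P -> ind P = 0.
Proof. by move=> p; rewrite /ind asboolF. Qed.

Fixpoint dedup (l : seq (RR -> X)) : seq (RR -> X) :=
  if l is x :: l' then
    (if has (fun s => `[< same1 x s >]) (dedup l') then dedup l' else x :: dedup l')
  else [::].

Lemma dedup_sub l y : y \in dedup l -> y \in l.
Proof.
elim: l => [//|x l IH] /=.
case: ifP => _.
  by move=> /IH yl; rewrite in_cons yl orbT.
by rewrite !in_cons => /orP [->//|/IH ->]; rewrite orbT.
Qed.

Lemma pick l s : (exists2 y, y \in l & same1 s y) ->
  \sum_(r <- dedup l) ind (same1 s r) * ph r = ph s.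
Proof.
elim: l => [|x l IH] /=; first by case.
move=> [y yin sy].
case Hh: (has (fun r => `[< same1 x r >]) (dedup l)).
  move: yin; rewrite in_cons => /orP [/eqP Hy | yl]; last by apply: IH; exists y.
  subst y; have /hasP [r rd /asboolP xr] := Hh.
  by apply: IH; exists r; [exact: dedup_sub | exact: same1_trans sy xr].
rewrite big_cons; have [sx|nsx] := pselect (same1 s x).
  rewrite indT // mul1r (phx _ _ (same1_sym sx)) big1_seq ?addr0 //.
  move=> r /andP [_ rd]; rewrite indF ?mul0r // => sr.
  move: Hh => /negbT /hasPn /(_ r rd); rewrite asboolT //.
  exact: same1_trans (same1_sym sx) sr.
rewrite indF // mul0r add0r; apply: IH.
move: yin; rewrite in_cons => /orP [/eqP Hy | yl]; first by subst y.
by exists y.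
Qed.

Lemma I01_0 : I01 0. Proof. by apply/I01P; rewrite lexx ler01. Qed.
Lemma I01_1 : I01 1. Proof. by apply/I01P; rewrite lexx ler01. Qed.

Lemma face_sing (t : RR * RR -> X) : sing2 t ->
  [/\ sing1 (face0 t), sing1 (face1 t) & sing1 (face2 t)].
Proof.
move=> ct; split.
- apply: (@subspace_eq_continuous _ I01 _ (colc X t 1)); last exact: colc_cont ct I01_1.
  by move=> u _; rewrite /colc /Hm /face0 /= !mul1r.
- apply: (@subspace_eq_continuous _ I01 _ (rowc X t 1)); last exact: rowc_cont ct I01_1.
  by move=> u _; rewrite /rowc /Hm /face1 /= subrr mulr0 mulr1.
- apply: (@subspace_eq_continuous _ I01 _ (rowc X t 0)); last exact: rowc_cont ct I01_0.
  by move=> u _; rewrite /rowc /Hm /face2 /= subr0 mulr0 mulr1.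
Qed.

Lemma Gsum (c : chain1 X) (d : chain2 X) :
  (forall e, e \in c -> sing1 e.2) -> (forall e, e \in d -> sing2 e.2) ->
  (forall s, sing1 s -> Defs.coef1 c s = bd2_coef d s) ->
  \sum_(e <- c) e.1 * ph e.2 =
  \sum_(e <- d) e.1 * (ph (face0 e.2) - ph (face1 e.2) + ph (face2 e.2)).
Proof.
move=> sc sd eq.
set R := [seq e.2 | e <- c] ++ flatten [seq [:: face0 e.2; face1 e.2; face2 e.2] | e <- d].
have inRc : forall e, e \in c -> e.2 \in R.
  by move=> e ec; rewrite mem_cat; apply/orP; left; apply/mapP; exists e.
have inRd : forall e, e \in d -> [/\ face0 e.2 \in R, face1 e.2 \in R & face2 e.2 \in R].
  move=> e ed; rewrite !mem_cat; split; apply/orP; right; apply/flattenP;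
    exists [:: face0 e.2; face1 e.2; face2 e.2];
    (try by apply/mapP; exists e); by rewrite !inE eqxx ?orbT.
have singR : forall s, s \in dedup R -> sing1 s.
  move=> s /dedup_sub; rewrite mem_cat => /orP [/mapP [e ec ->]|/flattenP [l /mapP [e ed ->]]].
    exact: sc.
  have [h0 h1 h2] := face_sing _ (sd e ed).
  by rewrite !inE => /orP [/eqP ->|/orP [/eqP ->|/eqP ->]].
have L : \sum_(e <- c) e.1 * ph e.2 = \sum_(s <- dedup R) Defs.coef1 c s * ph s.
  rewrite /Defs.coef1.
  under [RHS]eq_bigr => s _ do rewrite mulr_suml.
  rewrite exchange_big /=.
  apply: eq_big_seq => e ec.
  rewrite -(pick R e.2); last by exists e.2; [exact: inRc|exact: same1_refl].
  by rewrite mulr_sumr; apply: eq_bigr => s _; rewrite mulrA.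
have Rr : \sum_(e <- d) e.1 * (ph (face0 e.2) - ph (face1 e.2) + ph (face2 e.2))
    = \sum_(s <- dedup R) bd2_coef d s * ph s.
  rewrite /bd2_coef.
  under [RHS]eq_bigr => s _ do rewrite mulr_suml.
  rewrite exchange_big /=.
  apply: eq_big_seq => e ed.
  have [i0 i1 i2] := inRd e ed.
  rewrite -(pick R (face0 e.2)); last by exists (face0 e.2); last exact: same1_refl.
  rewrite -(pick R (face1 e.2)); last by exists (face1 e.2); last exact: same1_refl.
  rewrite -(pick R (face2 e.2)); last by exists (face2 e.2); last exact: same1_refl.
  rewrite -sumrB -big_split /= mulr_sumr; apply: eq_bigr => s _; ring.
rewrite L Rr; apply: eq_big_seq => s sR; by rewrite eq //; apply: singR.
Qed.

End Dedup.


Section Main.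
Variables (X : topologicalType) (K A B : set X).
Hypothesis cK : closed K.
Hypothesis hbd : forall x, K x -> ~ K° x -> A x \/ B x.
Hypothesis cA : closed A.
Hypothesis cB : closed B.
Hypothesis hAB : forall x, A x -> B x -> False.
Hypothesis h1 : H1_trivial X.

Let ph := phi X K A B.

Lemma key_cycle (x0 x y : X) (sx sy tau : RR -> X) :
  sing1 sx -> sing1 sy -> sing1 tau ->
  sx 0 = x0 -> sx 1 = x -> sy 0 = x0 -> sy 1 = y -> tau 0 = x -> tau 1 = y ->
  ph sy = ph sx + ph tau.
Proof.
move=> csx csy ctau sx0 sx1 sy0 sy1 t0 t1.
pose c : chain1 X := [:: (1, sx); (1, tau); (-1, sy)].
have sc : forall e, e \in c -> sing1 e.2.
  by move=> e; rewrite !inE => /orP [/eqP ->|/orP [/eqP ->|/eqP ->]].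
have cyc : is_cycle1 c.
  move=> z; rewrite /bd1_coef !big_cons big_nil /=.
  change (1 * (ind (sx 1 = z) - ind (sx 0 = z)) +
    (1 * (ind (tau 1 = z) - ind (tau 0 = z)) +
    (-1 * (ind (sy 1 = z) - ind (sy 0 = z)) + 0)) = 0).
  rewrite sx0 sx1 sy0 sy1 t0 t1; ring.
have [d [sd eqd]] := h1 c sc cyc.
have G := Gsum X ph (phi_ext X K A B) c d sc sd eqd.
have Z : \sum_(e <- d) e.1 * (ph (face0 e.2) - ph (face1 e.2) + ph (face2 e.2)) = 0.
  apply: big1_seq => e /andP [_ ed].
  by rewrite /ph (phi_simplex X K A B cK hbd cA cB hAB _ (sd e ed)) mulr0.
move: G; rewrite Z !big_cons big_nil /= => G.
by move: G; rewrite !mul1r mulN1r addr0 => G; rewrite -[LHS]addr0 -G; ring.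
Qed.

End Main.

Theorem lemmaA1 (X : topologicalType) (K : set X) :
  path_connected_space X -> locally_path_connected X -> H1_trivial X ->
  closed K -> connected K -> connected (~` K) ->
  connected (boundary K).
Proof.
move=> pcX lpc h1 cK cnK cnC C [a Ca] [Op oO CE] [F cF CE'].
apply: contrapT => Cne.
have clK : closure K = K by rewrite -(proj1 (closure_id K) cK).
have bdE : forall x, boundary K x <-> K x /\ ~ K° x.
  by move=> x; rewrite /boundary clK.
have Csub : forall x, C x -> boundary K x by move=> x; rewrite CE => -[].
pose B := [set x | boundary K x /\ ~ C x].
have [b Bb] : exists b, B b.
  apply: contrapT => nb; apply: Cne; apply/seteqP; split => x; first exact: Csub.
  move=> bx; apply: contrapT => nCx; apply: nb; by exists x.
have cbd : closed (boundary K).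
  rewrite /boundary setDE; apply: closedI; first exact: closed_closure.
  exact: open_closedC (open_interior K).
have cA : closed C by rewrite CE'; apply: closedI.
have cB : closed B.
  have -> : B = boundary K `&` ~` Op.
    apply/seteqP; split => x [bx H]; split => //.
      by move=> Ox; apply: H; rewrite CE.
    by rewrite CE => -[].
  by apply: closedI => //; exact: open_closedC.
have hbd : forall x, K x -> ~ K° x -> C x \/ B x.
  move=> x Kx nIx; have [Cx|nCx] := pselect (C x); first by left.
  by right; split => //; apply/bdE.
have hAB : forall x, C x -> B x -> False by move=> x Cx [].
have [Ka nIa] := proj1 (bdE a) (Csub a Ca).
have [Kb nIb] := proj1 (bdE b) (proj1 Bb).
have [sig Hs] : {sig : X -> RR -> X & forall x, is_path_in setT (sig x) a x}.
  by apply: (@choice X (RR -> X) (fun x f => is_path_in setT f a x)) => x; exact: pcX.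
pose Fv x := phi X K C B (sig x).
have Fk : forall x y tau, sing1 tau -> tau 0 = x -> tau 1 = y ->
    Fv y = Fv x + phi X K C B tau.
  move=> x y tau ct t0 t1.
  have [c1 [x0 [x1 _]]] := Hs x; have [c2 [y0 [y1 _]]] := Hs y.
  exact: (@key_cycle X K C B cK hbd cA cB hAB h1 a x y (sig x) (sig y) tau c1 c2 ct x0 x1 y0 y1 t0 t1).
have locB : forall x, ~ B x -> exists2 W, open W /\ W x &
    W `<=` ~` B /\ forall y, W y -> Fv y = Fv x + La X K C y - La X K C x.
  move=> x nBx; have [W [oW Wx WU pW]] := lpc x (~` B) (closed_openC cB) nBx.
  exists W => //; split => // y Wy; have [tau [ct [t0 [t1 sub]]]] := pW x y Wx Wy.
  rewrite (Fk x y tau ct t0 t1) (@phi_La X K C B cK hbd tau ct); last by move=> z /sub /WU.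
  by rewrite -[tau 1]/(tau (Rdefinitions.IZR (BinNums.Zpos 1%AC))) t1
    -[tau 0]/(tau (Rdefinitions.IZR BinNums.Z0)) t0 addrA.
have locA : forall x, ~ C x -> exists2 W, open W /\ W x &
    W `<=` ~` C /\ forall y, W y -> Fv y = Fv x + Lb X K B y - Lb X K B x.
  move=> x nCx; have [W [oW Wx WU pW]] := lpc x (~` C) (closed_openC cA) nCx.
  exists W => //; split => // y Wy; have [tau [ct [t0 [t1 sub]]]] := pW x y Wx Wy.
  rewrite (Fk x y tau ct t0 t1) (@phi_Lb X K C B cK hbd tau ct); last by move=> z /sub /WU.
  by rewrite -[tau 1]/(tau (Rdefinitions.IZR (BinNums.Zpos 1%AC))) t1
    -[tau 0]/(tau (Rdefinitions.IZR BinNums.Z0)) t0 addrA.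
pose h x := if `[< B x >] then Fv x - Lb X K B x + 4 else Fv x - La X K C x.
pose h' x := if `[< B x >] then Fv x - Lb X K B x else Fv x - La X K C x.
have hK : forall x y, K x -> K y -> h x = h y.
  apply: locconst_connected cnK _ => x Kx.
  have [Bx|nBx] := pselect (B x).
    have nCx : ~ C x by move=> Cx; apply: (hAB x Cx Bx).
    have [W [oW Wx] [WC HW]] := locA x nCx.
    exists W => // y Ky Wy; rewrite /h (asboolT Bx).
    have [By|nBy] := pselect (B y).
      by rewrite (asboolT By) HW //; ring.
    rewrite (asboolF nBy) HW // /La /Lb (asboolT Ky) (asboolF nBy) (asboolF (WC y Wy)).
    ring.
  have [W [oW Wx] [WB HW]] := locB x nBx.
  exists W => // y Ky Wy; rewrite /h (asboolF nBx) (asboolF (WB y Wy)) HW //; ring.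
have cnI : connected (~` K°) by rewrite -closure_setC; exact: connected_closure.
have hK' : forall x y, (~` K°) x -> (~` K°) y -> h' x = h' y.
  apply: locconst_connected cnI _ => x nIx.
  have [Bx|nBx] := pselect (B x).
    have nCx : ~ C x by move=> Cx; apply: (hAB x Cx Bx).
    have [W [oW Wx] [WC HW]] := locA x nCx.
    exists W => // y nIy Wy; rewrite /h' (asboolT Bx).
    have [By|nBy] := pselect (B y).
      by rewrite (asboolT By) HW //; ring.
    have nKy : ~ K y.
      by move=> Ky; case: (hbd y Ky nIy) => [/(WC y Wy)|/nBy].
    rewrite (asboolF nBy) HW // /La /Lb (asboolF nKy); ring.
  have [W [oW Wx] [WB HW]] := locB x nBx.
  exists W => // y nIy Wy; rewrite /h' (asboolF nBx) (asboolF (WB y Wy)) HW //; ring.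
have e1 := hK a b Ka Kb.
have e2 := hK' a b nIa nIb.
have nBa : ~ B a by move=> Ba; apply: (hAB a Ca Ba).
move: e1 e2; rewrite /h /h' (asboolF nBa) (asboolT Bb) /La /Lb (asboolT Ka) (asboolT Kb)
  (asboolT Ca) (asboolT Bb) => e1 e2.
have H4 : (4 : int) = 0.
  by apply: (@addrI _ (Fv b - 3)); rewrite addr0 -e1 e2.
by move/eqP: H4.
Qed.
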